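(* Let $q$ be a prime power, $\ell,\mu\ge1$, $\mathbf{w}\in\mathcal{W}(w,\ell,\mu)$ and let $u$ be an integer with $0\le u\le w$. Let $\mathbf{u}^*$ be any output of the following procedure $\mathrm{ucomp}_\mu(\mathbf{w},u)$: set $\mathbf{u}\leftarrow\mathbf{w}$ and repeat $w-u$ times: let $J_1=\{i:u_i>0\}$, $J_2=\{i\in J_1: w_i=\min_{j\in J_1}w_j\}$, $J_3=\{i\in J_2:u_i=\max_{j\in J_2}u_j\}$, choose any $h\in J_3$ and set $u_h\leftarrow u_h-1$; output $\mathbf{u}$. Then $\mathbf{u}^*\in\mathcal{W}(u,\ell,\mu)$ and $$\varphi'(\mathbf{u}^*,\mathbf{w})=\max_{\mathbf{u}\in\mathcal{W}(u,\ell,\mu)}\varphi'(\mathbf{u},\mathbf{w}),\qquad\text{where }\ \varphi'(\mathbf{u},\mathbf{w})\coloneqq\prod_{i=1}^{\ell}\Phi_\mu(u_i\subseteq w_i).$$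
   Context: Gaussian binomial: $\begin{bmatrix}a\\ b\end{bmatrix}_q=\prod_{i=0}^{b-1}\frac{q^{a-i}-1}{q^{b-i}-1}$. $\mathcal{W}(w,\ell,\mu)\coloneqq\{\mathbf{w}\in\{0,\dots,\mu\}^{\ell}:\sum_i w_i=w\}$. For integers $0\le a,b\le\mu$, $\Phi_\mu(a\subseteq b)\coloneqq\begin{bmatrix}b\\ a\end{bmatrix}_q/\begin{bmatrix}\mu\\ a\end{bmatrix}_q$ if $a\le b$ and $0$ if $a>b$ (the probability that a uniformly random $a$-dimensional subspace of $\mathbb{F}_q^\mu$ lies in a fixed $b$-dimensional subspace). *)

(* Defs.v *)
From mathcomp Require Import all_boot all_order all_algebra.
Set Implicit Arguments. Unset Strict Implicit. Unset Printing Implicit Defensive.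
Import Order.TTheory GRing.Theory Num.Theory.

Local Open Scope ring_scope.

Definition gauss_binom (q a b : nat) : rat :=
  \prod_(i < b) ((((q ^ (a - i))%N)%:R - 1) / (((q ^ (b - i))%N)%:R - 1)).

Definition Phi (q mu a b : nat) : rat :=
  if (a <= b)%N then gauss_binom q b a / gauss_binom q mu a else 0.

Definition phi' (q mu ell : nat) (u w : {ffun 'I_ell -> nat}) : rat :=
  \prod_(i < ell) Phi q mu (u i) (w i).

Definition inW (w ell mu : nat) (v : {ffun 'I_ell -> nat}) : Prop :=
  (forall i, (v i <= mu)%N) /\ (\sum_(i < ell) v i)%N = w.

Definition is_prime_power (q : nat) : Prop :=
  exists p k : nat, prime p /\ (0 < k)%N /\ q = (p ^ k)%N.

Definition inJ2 ell (w u : {ffun 'I_ell -> nat}) (i : 'I_ell) : bool :=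
  (0 < u i)%N && [forall j, (0 < u j)%N ==> (w i <= w j)%N].

Definition inJ3 ell (w u : {ffun 'I_ell -> nat}) (i : 'I_ell) : bool :=
  inJ2 w u i && [forall j, inJ2 w u j ==> (u j <= u i)%N].

Definition ucomp_step ell (w u u' : {ffun 'I_ell -> nat}) : Prop :=
  exists h : 'I_ell, inJ3 w u h /\
    u' = [ffun i => if i == h then (u i).-1 else u i].

Fixpoint ucomp_iter ell (w : {ffun 'I_ell -> nat}) (n : nat)
    (u u' : {ffun 'I_ell -> nat}) : Prop :=
  match n with
  | 0 => u' = u
  | n.+1 => exists v, ucomp_step w u v /\ ucomp_iter w n v u'
  end.

Definition ucomp_output ell (w : {ffun 'I_ell -> nat}) (wt u : nat)
    (ustar : {ffun 'I_ell -> nat}) : Prop :=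
  ucomp_iter w (wt - u) w ustar.

(* Main.v *)
Require Import Defs.
From mathcomp Require Import all_boot all_order all_algebra.
From mathcomp Require Import zify.
Import Order.TTheory GRing.Theory Num.Theory.
Local Open Scope ring_scope.

Lemma nat1 (a c p : nat) : (1 <= a -> a <= c -> 1 <= p -> (a - 1) * (c * p - 1) <= (a * p - 1) * (c - 1))%N.
Proof. move=> *. nia. Qed.
Lemma nat2 (q A B : nat) : (2 <= q -> 1 <= A -> q <= B -> (A - 1) * (B - 1) <= (q - 1) * (A * B - 1))%N.
Proof. move=> *. nia. Qed.

Lemma pow_gt1 (q m : nat) : (1 < q -> 0 < m -> 1 < q ^ m)%N.
Proof.
move=> hq; case: m => // m _; rewrite expnS.
have := expn_gt0 q m; rewrite (ltn_trans _ hq) //= => h. nia.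
Qed.

Lemma pow_ge1 (q m : nat) : (1 < q -> 1 <= q ^ m)%N.
Proof. move=> hq; rewrite expn_gt0; lia. Qed.

Lemma pow_le (q m n : nat) : (1 < q -> m <= n -> q ^ m <= q ^ n)%N.
Proof. move=> hq hmn; rewrite leq_pexp2l //; lia. Qed.

Definition g (q mu b k : nat) : rat :=
  (((q ^ (b - k))%N)%:R - 1) / (((q ^ (mu - k))%N)%:R - 1).

Lemma natr_m1 (n : nat) : (1 <= n)%N -> (n%:R - 1 : rat) = (n - 1)%N%:R.
Proof. by move=> h; rewrite natrB. Qed.

Lemma gE q mu b k : (1 < q)%N ->
  g q mu b k = (q ^ (b - k) - 1)%N%:R / (q ^ (mu - k) - 1)%N%:R.
Proof. by move=> hq; rewrite /g !natr_m1 ?pow_ge1. Qed.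

Lemma frac_le (A C A' C' : nat) : (0 < C)%N -> (0 < C')%N -> (A * C' <= A' * C)%N ->
  (A%:R / C%:R : rat) <= A'%:R / C'%:R.
Proof.
move=> hC hC' h.
rewrite ler_pdivlMr ?ltr0n // mulrAC ler_pdivrMr ?ltr0n // -!natrM ler_nat //.
Qed.

Lemma g_pos q mu b k : (1 < q)%N -> (k < b)%N -> (b <= mu)%N -> 0 < g q mu b k /\ g q mu b k <= 1.
Proof.
move=> hq hk hb; rewrite gE //.
have h1 := @pow_gt1 q (b - k) hq; have h2 := @pow_gt1 q (mu - k) hq.
have h3 : (q ^ (b - k) <= q ^ (mu - k))%N by apply: pow_le => //; lia.
split.
  apply: divr_gt0; rewrite ltr0n; lia.
rewrite ler_pdivrMr ?ltr0n; last by lia.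
by rewrite mul1r ler_nat; lia.
Qed.

Lemma frac_k (a c p : nat) : (1 < a)%N -> (a <= c)%N -> (1 <= p)%N ->
  ((a - 1)%N%:R / (c - 1)%N%:R : rat) <= (a * p - 1)%N%:R / (c * p - 1)%N%:R.
Proof.
move=> h1 h2 h3; apply: frac_le; [lia | nia | apply: nat1; lia].
Qed.

Lemma frac_b (a a' c : nat) : (1 < c)%N -> (a <= a')%N ->
  ((a - 1)%N%:R / (c - 1)%N%:R : rat) <= (a' - 1)%N%:R / (c - 1)%N%:R.
Proof.
move=> h1 h2; apply: frac_le; [lia | lia | ].
apply: leq_mul => //; lia.
Qed.

Lemma frac_cross (q A B : nat) : (2 <= q)%N -> (1 <= A)%N -> (q <= B)%N ->
  ((A - 1)%N%:R / (A * B - 1)%N%:R : rat) <= (q - 1)%N%:R / (B - 1)%N%:R.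
Proof.
move=> h1 h2 h3; apply: frac_le; [nia | lia | ].
apply: nat2 => //.
Qed.

Lemma g_mono_k q mu b k k' : (1 < q)%N -> (k <= k')%N -> (k' < b)%N -> (b <= mu)%N ->
  g q mu b k' <= g q mu b k.
Proof.
move=> hq hkk hk hb; rewrite !gE //.
have e1 : (q ^ (b - k) = q ^ (b - k') * q ^ (k' - k))%N by rewrite -expnD; f_equal; lia.
have e2 : (q ^ (mu - k) = q ^ (mu - k') * q ^ (k' - k))%N by rewrite -expnD; f_equal; lia.
rewrite e1 e2; apply: frac_k.
- apply: pow_gt1 => //; lia.
- apply: pow_le => //; lia.
- exact: pow_ge1.
Qed.

Lemma g_mono_b q mu b b' k : (1 < q)%N -> (k < b)%N -> (b <= b')%N -> (b' <= mu)%N ->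
  g q mu b k <= g q mu b' k.
Proof.
move=> hq hk hbb hb; rewrite !gE //; apply: frac_b.
- apply: pow_gt1 => //; lia.
- apply: pow_le => //; lia.
Qed.

Lemma g_cross q mu b : (1 < q)%N -> (1 <= b)%N -> (b <= mu)%N ->
  g q mu (b - 1) 0 <= g q mu b (b - 1).
Proof.
move=> hq hb1 hb; rewrite !gE //.
have e1 : (b - (b - 1) = 1)%N by lia.
have e2 : (q ^ (mu - 0) = q ^ (b - 1 - 0) * q ^ (mu - (b - 1)))%N by rewrite -expnD; f_equal; lia.
rewrite e1 e2 expn1; apply: frac_cross => //.
- exact: pow_ge1.
- rewrite -{1}(expn1 q); apply: pow_le => //; lia.
Qed.

Lemma g_dom q mu b b' k k' : (1 < q)%N -> (b' < b)%N -> (b <= mu)%N -> (k' < b')%N -> (k < b)%N ->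
  g q mu b' k' <= g q mu b k.
Proof.
move=> hq hbb hb hk' hk.
apply: (@le_trans _ _ (g q mu b' 0)); first by apply: g_mono_k => //; lia.
apply: (@le_trans _ _ (g q mu (b - 1) 0)); first by apply: g_mono_b => //; lia.
apply: (@le_trans _ _ (g q mu b (b - 1))); first by apply: g_cross => //; lia.
apply: g_mono_k => //; lia.
Qed.

Definition F (q mu b n : nat) : rat := \prod_(0 <= k < n) g q mu b k.

Lemma F_ge0 q mu b n : (1 < q)%N -> (n <= b)%N -> (b <= mu)%N -> 0 <= F q mu b n.
Proof.
move=> hq hn hb; rewrite /F big_mkord; apply: prodr_ge0 => k _.
have hk := ltn_ord k.
by apply: ltW; case: (@g_pos q mu b k hq (_ : k < b)%N hb) => //; lia.
Qed.

Lemma Phi_F q mu n b : (1 < q)%N -> (n <= b)%N -> Phi q mu n b = F q mu b n.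
Proof.
move=> hq hn; rewrite /Phi hn /gauss_binom /F -prodf_div big_mkord.
apply: eq_bigr => i _.
have hD : (((q ^ (n - i))%N)%:R - 1 : rat) != 0.
  rewrite natr_m1 ?pow_ge1 // pnatr_eq0.
  have := @pow_gt1 q (n - i) hq; have := ltn_ord i; lia.
by rewrite invf_div mulrA divfK.
Qed.

Lemma coord_bound q mu b n1 n2 (c : rat) : (1 < q)%N -> (b <= mu)%N ->
  (n1 <= b)%N -> (n2 <= b)%N -> 0 < c ->
  (forall k, (k < n2)%N -> c <= g q mu b k) ->
  (forall k, (n2 <= k)%N -> (k < b)%N -> g q mu b k <= c) ->
  F q mu b n1 * c ^+ n2 <= F q mu b n2 * c ^+ n1.
Proof.
move=> hq hb h1 h2 hc hkept hrem.
have hc0 : 0 <= c by apply: ltW.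
case: (leqP n1 n2) => h.
- have sp : F q mu b n2 = F q mu b n1 * \prod_(n1 <= k < n2) g q mu b k.
    by rewrite /F (@big_cat_nat _ _ _ n1).
  have ce : c ^+ n2 = c ^+ (n2 - n1) * c ^+ n1 by rewrite -exprD subnK.
  rewrite sp ce mulrA ler_pM2r ?exprn_gt0 //.
  apply: ler_wpM2l; first by apply: F_ge0 => //; lia.
  rewrite -prodr_const_nat big_nat_cond [X in _ <= X]big_nat_cond; apply: ler_prod => k /andP[/andP[hk1 hk2] _].
  rewrite hc0; exact: hkept.
- have sp : F q mu b n1 = F q mu b n2 * \prod_(n2 <= k < n1) g q mu b k.
    by rewrite /F (@big_cat_nat _ _ _ n2) //; lia.
  have ce : c ^+ n1 = c ^+ (n1 - n2) * c ^+ n2 by rewrite -exprD subnK //; lia.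
  rewrite sp ce mulrA ler_pM2r ?exprn_gt0 //.
  apply: ler_wpM2l; first by apply: F_ge0 => //; lia.
  rewrite -prodr_const_nat big_nat_cond [X in _ <= X]big_nat_cond; apply: ler_prod => k /andP[/andP[hk1 hk2] _].
  rewrite hrem //; last by lia.
  by case: (@g_pos q mu b k hq (_ : k < b)%N hb) => [|/ltW -> _] //; lia.
Qed.

Definition Inv ell (w u : {ffun 'I_ell -> nat}) : Prop :=
  forall i j, (u i < w i)%N -> (0 < u j)%N ->
    (w i < w j)%N \/ (w i = w j /\ (u j <= (u i).+1)%N).
Arguments Inv {ell}.

Lemma step_ok ell (w v v' : {ffun 'I_ell -> nat}) :
  (forall i, v i <= w i)%N -> ucomp_step w v v' ->
  [/\ (forall i, v' i <= w i)%N, ((\sum_i v' i).+1 = \sum_i v i)%N & (Inv w v -> Inv w v')].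
Proof.
move=> le [h [H3 ->]].
move: H3; rewrite /inJ3 => /andP[J2h /forallP maxu].
move: (J2h); rewrite /inJ2 => /andP[vh_pos /forallP minw].
split.
- move=> i; rewrite ffunE; case: eqP => _; last exact: le i.
  by have := le i; lia.
- rewrite (bigD1 h) //= [in RHS](bigD1 h) //= ffunE eqxx.
  have -> : (\sum_(i < ell | i != h) [ffun i0 => if i0 == h then (v i0).-1 else v i0] i
       = \sum_(i < ell | i != h) v i)%N.
    by apply: eq_bigr => i /negbTE hi; rewrite ffunE hi.
  by rewrite -addSn prednK.
- move=> I i j; rewrite !ffunE.
  case: (eqVneq i h) => [->|nih]; case: (eqVneq j h) => [->|njh].
  + by move=> _ _; right; split => //; lia.
  + move=> _ vj.
    have := minw j; rewrite vj /= => hwj.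
    case: (ltngtP (w h) (w j)) => hw; [by left | by lia | ].
    have J2j : inJ2 w v j.
      rewrite /inJ2 vj /=; apply/forallP => k; apply/implyP => vk.
      by have := minw k; rewrite vk /= -hw.
    have := maxu j; rewrite J2j /= => hu.
    by right; split => //; lia.
  + move=> vi vh.
    case: (I i h vi (_ : 0 < v h)%N) => //; [by left | move=> [e l]; right; split => //; lia].
  + move=> vi vj; exact: I i j vi vj.
Qed.

Arguments step_ok {ell w v v'}.

Lemma iter_ok ell (w : {ffun 'I_ell -> nat}) n : forall v u' : {ffun 'I_ell -> nat},
  (forall i, v i <= w i)%N -> ucomp_iter w n v u' ->
  [/\ (forall i, u' i <= w i)%N, (\sum_i u' i + n = \sum_i v i)%N & (Inv w v -> Inv w u')].
Proof.
elim: n => [|n IH] v u' le /=.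
  by move=> ->; split => //; rewrite addn0.
move=> [v1 [st it]].
have [le1 s1 I1] := step_ok le st.
have [le2 s2 I2] := IH _ _ le1 it.
split => //; first by rewrite -s1 -s2 addnS.
by move=> I; apply: I2; apply: I1.
Qed.
Arguments iter_ok {ell w n}.

Theorem mainTheorem8 (q ell mu wt u : nat) (w ustar : {ffun 'I_ell -> nat}) :
  is_prime_power q -> (1 <= ell)%N -> (1 <= mu)%N ->
  inW wt mu w -> (u <= wt)%N ->
  ucomp_output w wt u ustar ->
  inW u mu ustar /\
  (forall v : {ffun 'I_ell -> nat}, inW u mu v -> phi' q mu v w <= phi' q mu ustar w).
Proof.
move=> [p [k [pp [k0 eq]]]] hell hmu [wle wsum] hu hout.
have hq : (1 < q)%N by rewrite eq; apply: pow_gt1 => //; exact: prime_gt1.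
rewrite /ucomp_output in hout.
have [sle ssum sI] := iter_ok w ustar (fun i => leqnn _) hout.
have Is : Inv w ustar by apply: sI => i j; rewrite ltnn.
have ssum' : (\sum_(i < ell) ustar i = u)%N.
  move: ssum; rewrite wsum => h.
  by apply/eqP; rewrite -(eqn_add2r (wt - u)) h subnKC.
have smu i : (ustar i <= mu)%N by exact: leq_trans (sle i) (wle i).
split; first by split.
move=> v [vle vsum].
case: (boolP [exists i, w i < v i]%N) => [/existsP [i hi] | /existsPn hall].
  have -> : phi' q mu v w = 0.
    by rewrite /phi' (bigD1 i) //= {1}/Phi leqNgt hi /= mul0r.
  apply: prodr_ge0 => i0 _; rewrite Phi_F //; exact: F_ge0.
have hv i : (v i <= w i)%N by have := hall i; rewrite ltnNge negbK.
pose c := \big[Order.min/1]_(j | (0 < ustar j)%N) g q mu (w j) (ustar j).-1.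
have cpos : 0 < c.
  apply/bigmin_gtP; split => // j hj.
  have hj' : ((ustar j).-1 < w j)%N by have := sle j; lia.
  by have [gp _] := @g_pos q mu (w j) (ustar j).-1 hq hj' (wle j).
have kept i kk : (kk < ustar i)%N -> c <= g q mu (w i) kk.
  move=> hk; apply: (@le_trans _ _ (g q mu (w i) (ustar i).-1)).
    by rewrite /c; apply: bigmin_le_cond; lia.
  by apply: g_mono_k => //; have := sle i; lia.
have rem i kk : (ustar i <= kk)%N -> (kk < w i)%N -> g q mu (w i) kk <= c.
  move=> h1 h2; apply/bigmin_geP; split.
    by have [_ ->] := @g_pos q mu (w i) kk hq h2 (wle i).
  move=> j hj; have hj2 := sle j.
  have hi : (ustar i < w i)%N by lia.
  case: (Is i j hi hj) => [hw|[hw hu']].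
    by apply: g_dom => //; lia.
  by rewrite hw; apply: g_mono_k => //; lia.
have key : \prod_(i < ell) (F q mu (w i) (v i) * c ^+ ustar i)
        <= \prod_(i < ell) (F q mu (w i) (ustar i) * c ^+ v i).
  apply: ler_prod => i _; apply/andP; split.
    by apply: mulr_ge0; [apply: F_ge0 | apply: exprn_ge0; apply: ltW].
  apply: coord_bound => //; [exact: kept | exact: rem].
move: key; rewrite !big_split /= !prodrXr ssum' vsum ler_pM2r ?exprn_gt0 //.
have e (a : {ffun 'I_ell -> nat}) : (forall i, a i <= w i)%N -> phi' q mu a w = \prod_(i < ell) F q mu (w i) (a i).
  by move=> ha; apply: eq_bigr => i _; apply: Phi_F.
by rewrite (e v hv) (e ustar sle).
Qed.
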